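(* Let $D$ be an oriented graph whose missing graph is a vertex-disjoint union of paths, and let $ab$, $xy$, $zt$ be missing edges of $D$. If $ab$ loses to $xy$ and $ab$ loses to $zt$, then $\{x,y\}\cap\{z,t\}\neq\emptyset$.
   Context: All digraphs are finite oriented graphs. $N^+(v)$ is the out-neighborhood; $N^{++}(v)$ is the set of vertices $w\notin N^+(v)\cup\{v\}$ with $u\to w$ for some $u\in N^+(v)$. A missing edge is a pair of distinct non-adjacent vertices; the missing graph is formed by the missing edges. For missing edges $\{x,y\},\{a,b\}$, $\{x,y\}$ loses to $\{a,b\}$ if the endpoints can be labelled so that $x\to a$, $b\notin N^+(x)\cup N^{++}(x)$, $y\to b$, $a\notin N^+(y)\cup N^{++}(y)$. *)

(* Defs.v *)
From mathcomp Require Import all_boot.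
Set Implicit Arguments. Unset Strict Implicit. Unset Printing Implicit Defensive.

Section Digraphs.
Variable T : finType.

Definition oriented (D : rel T) : Prop :=
  (forall v, ~~ D v v) /\ (forall u v, D u v -> ~~ D v u).

Definition missing (D : rel T) : rel T :=
  fun u v => (u != v) && ~~ D u v && ~~ D v u.

Definition Nout (D : rel T) (v : T) : {set T} := [set u | D v u].

Definition Nout2 (D : rel T) (v : T) : {set T} :=
  [set w | (w \notin Nout D v) && (w != v) && [exists u in Nout D v, D u w]].

Definition missing_union_of_paths (D : rel T) : Prop :=
  (forall v, #|[set u | missing D v u]| <= 2) /\
  (forall s : seq T, 3 <= size s -> uniq s -> ~~ cycle (missing D) s).

Definition loses_lab (D : rel T) (x y a b : T) : Prop :=
  D x a /\ b \notin Nout D x :|: Nout2 D x /\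
  D y b /\ a \notin Nout D y :|: Nout2 D y.

(* Missing edge {x,y} loses to missing edge {a,b}: for some labelling of
   the endpoints. *)
Definition loses (D : rel T) (x y a b : T) : Prop :=
  loses_lab D x y a b \/ loses_lab D y x a b \/
  loses_lab D x y b a \/ loses_lab D y x b a.

End Digraphs.

(* Main.v *)
Require Import Defs.
From mathcomp Require Import all_boot.

Lemma missingC (T : finType) (D : rel T) u v : missing D u v = missing D v u.
Proof. by rewrite /missing eq_sym andbAC. Qed.

Lemma miss_key {T : finType} {D : rel T} {p q u w : T} :
  missing D p q -> D p u -> D q w ->
  w \notin Nout D p :|: Nout2 D p -> u \notin Nout D q :|: Nout2 D q ->
  u != w -> missing D u w.
Proof.
move=> Mpq Dpu Dqw Hw Hu nuw.
have Mqp : missing D q p by rewrite missingC.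
rewrite /missing nuw /=.
apply/andP; split.
- apply/negP=> Duw; move: Hw; rewrite in_setU negb_or => /andP[Hw1 Hw2].
  move/negP: Hw2; apply; rewrite /Nout2 inE Hw1 /=.
  apply/andP; split.
  + apply/negP=> /eqP Ewp; subst w.
    by move: Mqp; rewrite /missing Dqw /= andbF.
  + by apply/existsP; exists u; rewrite /Nout inE Dpu.
- apply/negP=> Dwu; move: Hu; rewrite in_setU negb_or => /andP[Hu1 Hu2].
  move/negP: Hu2; apply; rewrite /Nout2 inE Hu1 /=.
  apply/andP; split.
  + apply/negP=> /eqP Eup; subst u.
    by move: Mpq; rewrite /missing Dpu /= andbF.
  + by apply/existsP; exists w; rewrite /Nout inE Dqw.
Qed.

Lemma lab_swap (T : finType) (D : rel T) p q u v :
  loses_lab D q p u v -> loses_lab D p q v u.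
Proof. by case=> [h1 [h2 [h3 h4]]]; split; [|split; [|split]]. Qed.

Lemma norm_loses (T : finType) (D : rel T) a b x y :
  loses D a b x y ->
  exists u v, loses_lab D a b u v /\ ((u = x /\ v = y) \/ (u = y /\ v = x)).
Proof.
case=> [h|[h|[h|h]]].
- by exists x, y; split; [|left].
- by exists y, x; split; [apply: lab_swap|right].
- by exists y, x; split; [|right].
- by exists x, y; split; [apply: lab_swap|left].
Qed.

Theorem lemma4p1 (T : finType) (D : rel T) (a b x y z t : T) :
  oriented D ->
  missing_union_of_paths D ->
  missing D a b -> missing D x y -> missing D z t ->
  loses D a b x y -> loses D a b z t ->
  [set x; y] :&: [set z; t] != set0.
Proof.
move=> _ [_ Hcyc] Mab Mxy Mzt /norm_loses [u [v [L1 E1]]] /norm_loses [u' [v' [L2 E2]]].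
apply/negP=> /eqP E.
have nin : forall r s, r \in [set x; y] -> s \in [set z; t] -> r != s.
  move=> r s Hr Hs; apply/negP=> /eqP Ers; subst s.
  have : r \in [set x; y] :&: [set z; t] by rewrite inE Hr Hs.
  by rewrite E inE.
have Hu : u \in [set x; y] by case: E1 => [[-> _]|[-> _]]; rewrite !inE eqxx ?orbT.
have Hv : v \in [set x; y] by case: E1 => [[_ ->]|[_ ->]]; rewrite !inE eqxx ?orbT.
have Hu' : u' \in [set z; t] by case: E2 => [[-> _]|[-> _]]; rewrite !inE eqxx ?orbT.
have Hv' : v' \in [set z; t] by case: E2 => [[_ ->]|[_ ->]]; rewrite !inE eqxx ?orbT.
have Muv : missing D u v by case: E1 => [[-> ->]|[-> ->]]; rewrite // missingC.
have Mu'v' : missing D u' v' by case: E2 => [[-> ->]|[-> ->]]; rewrite // missingC.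
have Mba : missing D b a by rewrite missingC.
case: L1 => [D1 [N1 [D2 N2]]]; case: L2 => [D3 [N3 [D4 N4]]].
have M1 : missing D v u' by apply: (miss_key Mba D2 D3 N4 N1 (nin _ _ Hv Hu')).
have M2 : missing D v' u.
  apply: (miss_key Mba D4 D1 N2 N3); apply/negP=> /eqP E'.
  by move: (nin _ _ Hu Hv'); rewrite E' eqxx.
have nuv : u != v by move: Muv; rewrite /missing => /andP[/andP[]].
have nu'v' : u' != v' by move: Mu'v'; rewrite /missing => /andP[/andP[]].
move: (Hcyc [:: u; v; u'; v'] isT).
have -> : uniq [:: u; v; u'; v'].
  rewrite /= !inE !negb_or nuv nu'v' (nin _ _ Hu Hu') (nin _ _ Hu Hv')
    (nin _ _ Hv Hu') (nin _ _ Hv Hv') //.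
rewrite /= Muv M1 Mu'v' M2 /=.
by move=> H; have := H isT.
Qed.
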